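(* For $a\in[0,1)$, $m\in\mathbb{N}$ and $\theta\in[-\pi,\pi]\setminus\{0\}$ let \[ g_m(\theta;a):=\frac{|\sin(m\theta)-a\sin((m-1)\theta)|}{|\sin\theta|\sqrt{1+a^2-2a\cos\theta}}, \] and let $g_m(0;a)$ (and the values at $\pm\pi$, $0$ where $\sin\theta=0$) be defined by continuous extension. Then \[ \max_{\theta\in[-\pi,\pi]}g_m(\theta;a)=g_m(0;a)=\frac{m-a(m-1)}{1-a}. \]
   Context: $\mathbb{N}=\{1,2,\dots\}$. *)

(* Defs.v *)
From Stdlib Require Import Reals.
From Coquelicot Require Import Coquelicot.
Open Scope R_scope.

Definition g_formula (m : nat) (a theta : R) : R :=
  Rabs (sin (INR m * theta) - a * sin ((INR m - 1) * theta)) /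
  (Rabs (sin theta) * sqrt (1 + a ^ 2 - 2 * a * cos theta)).

(* g_m(theta; a): the formula where sin theta <> 0, and the (punctured)
   limit of the formula at points where sin theta = 0 (continuous extension). *)
Definition g (m : nat) (a theta : R) : R :=
  if Req_EM_T (sin theta) 0 then real (Lim (g_formula m a) theta)
  else g_formula m a theta.

(* Main.v *)
From Stdlib Require Import Reals Lra Lia.
Require Import Defs.
From Coquelicot Require Import Coquelicot.
Open Scope R_scope.

Fixpoint U (k : nat) (t : R) : R :=
  match k with O => 0 | S k' => U k' t * cos t + cos (INR k' * t) end.

Lemma U_sin k t : sin (INR k * t) = sin t * U k t.
Proof.
  induction k as [|k IH]; simpl U.
  - simpl. rewrite Rmult_0_l, sin_0. ring.
  - rewrite S_INR. replace ((INR k + 1) * t) with (INR k * t + t) by ring.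
    rewrite sin_plus, IH. ring.
Qed.

Lemma U_bound k t : Rabs (U k t) <= INR k.
Proof.
  induction k as [|k IH]; simpl U.
  - simpl. rewrite Rabs_R0. lra.
  - rewrite S_INR. eapply Rle_trans. apply Rabs_triang.
    rewrite Rabs_mult. pose proof (COS_bound t). pose proof (COS_bound (INR k * t)).
    assert (Rabs (cos t) <= 1) by (apply Rabs_le; lra).
    assert (Rabs (cos (INR k * t)) <= 1) by (apply Rabs_le; lra).
    assert (0 <= Rabs (U k t)) by apply Rabs_pos.
    nra.
Qed.

Lemma U_0 k : U k 0 = INR k.
Proof.
  induction k as [|k IH]; simpl U. reflexivity.
  rewrite IH, Rmult_0_r, cos_0, S_INR. ring.
Qed.

Lemma cont_mult (f h : R -> R) x : continuous f x -> continuous h x -> continuous (fun y => f y * h y) x.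
Proof. intros. apply (continuous_mult f h x); auto. Qed.
Lemma cont_plus (f h : R -> R) x : continuous f x -> continuous h x -> continuous (fun y => f y + h y) x.
Proof. intros. apply (continuous_plus f h x); auto. Qed.
Lemma cont_minus (f h : R -> R) x : continuous f x -> continuous h x -> continuous (fun y => f y - h y) x.
Proof. intros. apply (continuous_minus f h x); auto. Qed.

Lemma U_cont k x : continuous (U k) x.
Proof.
  induction k as [|k IH]; simpl U.
  - apply continuous_const.
  - apply cont_plus. apply cont_mult; auto. apply continuous_cos.
    apply continuous_cos_comp. apply cont_mult. apply continuous_const. apply continuous_id.
Qed.
Definition F (n : nat) (a t : R) : R :=
  Rabs (U n t * (cos t - a) + cos (INR n * t)) / sqrt (1 + a ^ 2 - 2 * a * cos t).

Lemma D_ge a t : 0 <= a < 1 -> (1 - a)^2 <= 1 + a ^ 2 - 2 * a * cos t.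
Proof. intros. pose proof (COS_bound t). nra. Qed.

Lemma sD_ge a t : 0 <= a < 1 -> 1 - a <= sqrt (1 + a ^ 2 - 2 * a * cos t).
Proof.
  intros. rewrite <- (sqrt_pow2 (1 - a)) by lra. apply sqrt_le_1_alt. now apply D_ge.
Qed.

Lemma F_bound n a t : 0 <= a < 1 -> F n a t <= INR n + 1 / (1 - a).
Proof.
  intros Ha. unfold F. set (s := sqrt _). assert (Hs : 1 - a <= s) by apply sD_ge, Ha.
  assert (Hc : Rabs (cos t - a) <= s).
  { unfold s. rewrite <- sqrt_Rsqr_abs. apply sqrt_le_1_alt. unfold Rsqr.
    pose proof (sin2_cos2 t). unfold Rsqr in *. nra. }
  assert (HX : Rabs (U n t * (cos t - a) + cos (INR n * t)) <= INR n * s + 1).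
  { eapply Rle_trans. apply Rabs_triang. rewrite Rabs_mult.
    pose proof (U_bound n t). pose proof (COS_bound (INR n * t)).
    assert (Rabs (cos (INR n * t)) <= 1) by (apply Rabs_le; lra).
    pose proof (Rabs_pos (U n t)). pose proof (Rabs_pos (cos t - a)). nra. }
  apply Rle_trans with ((INR n * s + 1) / s).
  { unfold Rdiv. apply Rmult_le_compat_r. left. apply Rinv_0_lt_compat. lra. exact HX. }
  replace ((INR n * s + 1) / s) with (INR n + 1 / s) by (field; lra).
  apply Rplus_le_compat_l. unfold Rdiv. rewrite !Rmult_1_l. apply Rinv_le_contravar; lra.
Qed.

Lemma F_0 n a : 0 <= a < 1 -> F n a 0 = (INR (S n) - a * (INR (S n) - 1)) / (1 - a).
Proof.
  intros Ha. unfold F. rewrite U_0, Rmult_0_r, cos_0.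
  replace (1 + a ^ 2 - 2 * a * 1) with ((1 - a)^2) by ring. rewrite sqrt_pow2 by lra.
  rewrite Rabs_pos_eq. rewrite S_INR. field. lra.
  pose proof (pos_INR n). nra.
Qed.

Lemma key n a t : 0 <= a < 1 -> sin t <> 0 -> g_formula (S n) a t = F n a t.
Proof.
  intros Ha Hs. unfold g_formula, F.
  replace (INR (S n) - 1) with (INR n) by (rewrite S_INR; ring).
  rewrite S_INR. replace ((INR n + 1) * t) with (INR n * t + t) by ring.
  rewrite sin_plus, U_sin.
  replace (sin t * U n t * cos t + cos (INR n * t) * sin t - a * (sin t * U n t))
    with (sin t * (U n t * (cos t - a) + cos (INR n * t))) by ring.
  rewrite Rabs_mult.
  assert (0 < sqrt (1 + a ^ 2 - 2 * a * cos t)) by (pose proof (sD_ge a t Ha); lra).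
  assert (Rabs (sin t) <> 0) by (apply Rabs_no_R0; auto).
  field. split; lra.
Qed.

Lemma F_cont n a t : 0 <= a < 1 -> continuous (F n a) t.
Proof.
  intros Ha. unfold F, Rdiv. apply cont_mult.
  - apply continuous_Rabs_comp. apply cont_plus. apply cont_mult. apply U_cont.
    apply cont_minus. apply continuous_cos. apply continuous_const.
    apply continuous_cos_comp. apply cont_mult. apply continuous_const. apply continuous_id.
  - apply continuous_Rinv_comp. apply continuous_sqrt_comp.
    apply cont_minus. apply continuous_const. apply cont_mult. apply continuous_const. apply continuous_cos.
    pose proof (sD_ge a t Ha). lra.
Qed.

Lemma sin_iso t0 t : sin t0 = 0 -> t <> t0 -> Rabs (t - t0) < 1 -> sin t <> 0.
Proof.
  intros H0 Hne Hd Hs. destruct (sin_eq_0_0 _ H0) as [j Hj]. destruct (sin_eq_0_0 _ Hs) as [k Hk].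
  subst. destruct (Z.eq_dec k j) as [->|Hkj]. now apply Hne.
  assert (Hz : (k - j >= 1)%Z \/ (k - j <= -1)%Z) by lia.
  pose proof PI_RGT_0. pose proof PI_4.
  assert (Hp : 1 < PI) by (pose proof PI2_1; lra).
  replace (IZR k * PI - IZR j * PI) with (IZR (k - j) * PI) in Hd by (rewrite minus_IZR; ring).
  rewrite Rabs_mult, (Rabs_pos_eq PI) in Hd by lra.
  destruct Hz as [Hz|Hz].
  - apply IZR_ge in Hz. rewrite Rabs_pos_eq in Hd by lra. nra.
  - apply IZR_le in Hz. rewrite Rabs_left in Hd by lra. nra.
Qed.

Lemma lim_F n a t0 : 0 <= a < 1 -> sin t0 = 0 -> is_lim (g_formula (S n) a) t0 (F n a t0).
Proof.
  intros Ha H0. apply is_lim_ext_loc with (F n a).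
  - exists (mkposreal 1 Rlt_0_1). intros y Hy Hne. symmetry. apply key; auto.
    apply (sin_iso t0); auto.
  - apply (is_lim_comp_continuous (fun y => y) (F n a) t0 t0). apply is_lim_id. apply F_cont, Ha.
Qed.

Lemma g_F n a t : 0 <= a < 1 -> g (S n) a t = F n a t.
Proof.
  intros Ha. unfold g. destruct (Req_EM_T (sin t) 0) as [H|H].
  - rewrite (is_lim_unique _ _ _ (lim_F n a t Ha H)). reflexivity.
  - now apply key.
Qed.

Theorem lemma5p1 (m : nat) (a : R) :
  (1 <= m)%nat -> 0 <= a < 1 ->
  (forall theta, -PI <= theta <= PI -> sin theta = 0 ->
     ex_finite_lim (g_formula m a) theta) /\
  (forall theta, -PI <= theta <= PI -> g m a theta <= g m a 0) /\
  g m a 0 = (INR m - a * (INR m - 1)) / (1 - a).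
Proof.
  intros Hm Ha. destruct m as [|n]. lia.
  split; [|split].
  - intros t _ H. exists (F n a t). apply lim_F; auto.
  - intros t _. rewrite !g_F by auto. rewrite F_0 by auto.
    replace ((INR (S n) - a * (INR (S n) - 1)) / (1 - a)) with (INR n + 1 / (1 - a))
      by (rewrite S_INR; field; lra).
    apply F_bound, Ha.
  - rewrite g_F by auto. apply F_0, Ha.
Qed.
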